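(* For every Parikh vector $P \in \mathbb{N}_0^{\sigma}$ with $n = \sum_{a\in\Sigma} P[a] \geq 1$, the diameter of the configuration graph $G(P)$ equals $n - \max_{a \in \Sigma} P[a]$.
   Context: Alphabet $\Sigma = [\sigma]$. For $P \in \mathbb{N}_0^\sigma$, $n := \sum_a P[a]$ and $\Sigma^{*|_P}$ is the set of words of length $n$ over $\Sigma$ in which each symbol $a$ occurs exactly $P[a]$ times. For a word $w$ and $i\neq j$ with $w[i]\neq w[j]$, the 2-swap $w\circ(i,j)$ exchanges the symbols at positions $i$ and $j$. The configuration graph $G(P)$ has vertex set $\Sigma^{*|_P}$ and an edge $\{w,u\}$ whenever $u = w\circ(i,j)$ for some 2-swap. $G(P)$ is connected; its diameter is the maximum over pairs of vertices of their shortest-path distance. *)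

(* Defs.v *)
From mathcomp Require Import all_boot all_fingroup.
Set Implicit Arguments. Unset Strict Implicit. Unset Printing Implicit Defensive.

Section Config.
Variables (sigma : nat) (P : 'I_sigma -> nat).

Definition plen : nat := \sum_(a < sigma) P a.

Definition word := plen.-tuple 'I_sigma.

Definition in_parikh (w : word) : bool :=
  [forall a : 'I_sigma, count_mem a w == P a].

Definition swap2 (w : word) (i j : 'I_plen) : word :=
  [tuple tnth w (tperm i j k) | k < plen].

Definition adjG (w u : word) : bool :=
  [&& in_parikh w, in_parikh u &
   [exists i : 'I_plen, exists j : 'I_plen,
      (i != j) && (tnth w i != tnth w j) && (u == swap2 w i j)]].

Definition walk_len (w u : word) (k : nat) : Prop :=
  exists p : seq word, [/\ path adjG w p, last w p = u & size p = k].

Definition is_dist (w u : word) (d : nat) : Prop :=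
  walk_len w u d /\ forall k, walk_len w u k -> d <= k.

Definition is_diameter (D : nat) : Prop :=
  (forall w u : word, in_parikh w -> in_parikh u ->
     exists d, is_dist w u d /\ d <= D) /\
  (exists w u : word, [/\ in_parikh w, in_parikh u & is_dist w u D]).

End Config.

(* Main.v *)
Require Import Defs.
From mathcomp Require Import all_boot all_fingroup zify.
From Stdlib Require Import Classical.
Set Implicit Arguments. Unset Strict Implicit. Unset Printing Implicit Defensive.

Lemma cntE n (T : eqType) (t : n.-tuple T) (c : T) :
  count_mem c t = \sum_(j < n) (tnth t j == c).
Proof.
rewrite -sum1_count big_tuple big_mkcond /=.
by apply: eq_bigr => j _; case: (_ == _).
Qed.

Lemma tnth_swap2 sigma (P : 'I_sigma -> nat) (w : word P) i j k :
  tnth (swap2 w i j) k = tnth w (tperm i j k).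
Proof. by rewrite /swap2 tnth_mktuple. Qed.

Lemma swap2_parikh sigma (P : 'I_sigma -> nat) (w : word P) i j :
  in_parikh w -> in_parikh (swap2 w i j).
Proof.
move=> /forallP H; apply/forallP => a; rewrite cntE.
under eq_bigr do rewrite tnth_swap2.
rewrite (reindex_inj (@perm_inj _ (tperm i j))) /=.
under eq_bigr do rewrite tpermK.
by rewrite -cntE (eqP (H a)).
Qed.

Lemma balance n (T : eqType) (w u : n.-tuple T) c :
  count_mem c w = count_mem c u ->
  \sum_(j < n) ((tnth w j == c) && (tnth u j != c)) =
  \sum_(j < n) ((tnth u j == c) && (tnth w j != c)).
Proof.
rewrite !cntE.
have sp : forall (x y : T), ((x == c) : nat) = ((x == c) && (y == c)) + ((x == c) && (y != c)).
  by move=> x y; case: (x == c); case: (y == c).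
rewrite (eq_bigr _ (fun j _ => sp (tnth w j) (tnth u j))).
rewrite [in RHS](eq_bigr _ (fun j _ => sp (tnth u j) (tnth w j))).
rewrite !big_split /=.
have -> : \sum_(i < n) ((tnth u i == c) && (tnth w i == c)) =
          \sum_(i < n) ((tnth w i == c) && (tnth u i == c)).
  by apply: eq_bigr => j _; rewrite andbC.
by move/addnI.
Qed.

Lemma pick_sum n (b : 'I_n -> bool) : 0 < \sum_(j < n) b j -> exists j, b j.
Proof.
case: (pickP b) => [j bj|H]; first by exists j.
by rewrite big1 // => j _; rewrite H.
Qed.

Definition mu sigma (P : 'I_sigma -> nat) (w u : word P) (a : 'I_sigma) :=
  \sum_(j < plen P) ((tnth w j != tnth u j) && (tnth u j != a)).

Lemma mu0 sigma (P : 'I_sigma -> nat) (w u : word P) a :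
  in_parikh w -> in_parikh u -> mu w u a = 0 -> w = u.
Proof.
move=> /forallP Hw /forallP Hu /eqP; rewrite /mu sum_nat_eq0 => /forallP H0.
have {}H0 : forall j, ~~ ((tnth w j != tnth u j) && (tnth u j != a)).
  by move=> j; move: (H0 j); case: (_ && _).
apply: eq_from_tnth => k; apply/eqP; apply/negPn/negP => Hk.
have Huk : tnth u k = a.
  by apply/eqP; move: (H0 k); rewrite Hk /=; case: (tnth u k == a).
have := balance (c := a) (w := w) (u := u).
rewrite (eqP (Hw a)) (eqP (Hu a)) => /(_ erefl).
rewrite big1; last first.
  move=> j _; move: (H0 j).
  case: (tnth w j =P a) => //= wa; case: (tnth u j =P a) => //= ua.
  by rewrite wa eq_sym; move/eqP: ua => ->.
move=> /esym/eqP; rewrite sum_nat_eq0 => /forallP /(_ k) /=.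
by rewrite Huk eqxx eq_sym -Huk Hk.
Qed.

Lemma upper_walk sigma (P : 'I_sigma -> nat) a k : forall (w u : word P),
  in_parikh w -> in_parikh u -> mu w u a <= k ->
  exists k', k' <= mu w u a /\ walk_len w u k'.
Proof.
elim: k => [|k IH] w u Hw Hu Hk.
  have e : mu w u a = 0 by apply/eqP; rewrite -leqn0.
  by exists 0; split => //; exists [::]; rewrite (mu0 Hw Hu e).
case: (posnP (mu w u a)) => [e|pos].
  by exists 0; split => //; exists [::]; rewrite (mu0 Hw Hu e).
have [i /andP[wi ua]] := pick_sum pos.
set c := tnth u i.
have HwP := Hw; have HuP := Hu.
move/forallP: Hw => Hw'; move/forallP: Hu => Hu'.
have bal := balance (c := c) (w := w) (u := u).
rewrite (eqP (Hw' c)) (eqP (Hu' c)) in bal; move: (bal erefl) => {}bal.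
have : 0 < \sum_(j < plen P) ((tnth w j == c) && (tnth u j != c)).
  rewrite bal (bigD1 i) //= /c eqxx /=.
  by rewrite ?wi /=.
move=> /pick_sum [j /andP[wj uj]].
have wij : tnth w i != tnth w j by rewrite (eqP wj); exact: wi.
have ij : i != j by apply: contraNneq wij => ->.
set w' := swap2 w i j.
have Hw'P : in_parikh w' by apply: swap2_parikh.
have w'i : tnth w' i = c by rewrite /w' tnth_swap2 tpermL (eqP wj).
have w'j : tnth w' j = tnth w i by rewrite /w' tnth_swap2 tpermR.
have w'k : forall k, k != i -> k != j -> tnth w' k = tnth w k.
  by move=> k0 ki kj; rewrite /w' tnth_swap2 tpermD // eq_sym.
have lt : mu w' u a < mu w u a.
  rewrite /mu (bigD1 i) //= [X in _ < X](bigD1 i) //= w'i /c eqxx /= wi ua /=.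
  rewrite add1n ltnS; apply: leq_sum => k0 k0i.
  case: (eqVneq k0 j) => [->|k0j]; last by rewrite w'k.
  have uj' : (c != tnth u j) by rewrite eq_sym. rewrite w'j (eqP wj) uj' /=.
  by case: (_ != _); case: (_ != _).
have [k' [k'le [p [pth pl ps]]]] : exists k', k' <= mu w' u a /\ walk_len w' u k'.
  by apply: IH => //; rewrite -ltnS; apply: leq_trans lt Hk.
exists k'.+1; split; first by apply: leq_ltn_trans lt.
exists (w' :: p); split => //=; last by rewrite ps.
rewrite pth andbT /adjG HwP Hw'P /=.
by apply/existsP; exists i; apply/existsP; exists j; rewrite ij wij eqxx.
Qed.

Lemma mu_le sigma (P : 'I_sigma -> nat) (w u : word P) a :
  in_parikh u -> mu w u a <= plen P - P a.
Proof.
move=> /forallP /(_ a) /eqP Hu.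
have e : \sum_(j < plen P) (tnth u j != a) + \sum_(j < plen P) (tnth u j == a) = plen P.
  rewrite -big_split /= -[X in _ = X]card_ord -sum1_card.
  by apply: eq_bigr => j _; case: (_ == _).
rewrite -Hu cntE -[X in _ <= X - _]e addnK.
by apply: leq_sum => j _; case: (_ != _); case: (_ != _).
Qed.

Lemma min_dist sigma (P : 'I_sigma -> nat) (w u : word P) k :
  walk_len w u k -> exists d, is_dist w u d /\ d <= k.
Proof.
elim: k {-2}k (leqnn k) => [|m IH] k le.
  rewrite leqn0 in le; rewrite (eqP le) => W.
  by exists 0; split => //; split => // k' _.
move=> W.
case: (classic (exists k', k' < k /\ walk_len w u k')) => [[k' [lt W']]|N].
  have [d [Hd le']] := IH k' (leq_trans (ltnSE (leq_trans lt le)) (leqnn _)) W'.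
  by exists d; split => //; apply: leq_trans le' (ltnW lt).
exists k; split => //; split => // k' W'.
by rewrite leqNgt; apply/negP => lt; apply: N; exists k'.
Qed.

Lemma porbits1 (T : finType) : #|porbits (1 : {perm T})| = #|T|.
Proof.
rewrite /porbits card_imset // => x y /eqP.
rewrite eq_porbit_mem => /porbitP [i ->].
by rewrite expg1n perm1.
Qed.

Lemma porbits_mulr (T : finType) (s : {perm T}) x y :
  #|porbits s| <= #|porbits (s * tperm x y)| + 1.
Proof.
rewrite -porbitsV -[porbits (s * _)]porbitsV invMg tpermV.
have := porbits_mul_tperm s^-1 x y => /= e.
case: (eqVneq x y) => [->|xy]; first by rewrite tperm1 mul1g leq_addr.
move: e; rewrite xy /=; case: (x \notin _) => /= e;
  by rewrite -(leq_add2r 1) -e -addnA leq_add2l.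
Qed.

Lemma walk_perm sigma (P : 'I_sigma -> nat) (w x : word P) k :
  walk_len w x k -> exists pi : {perm 'I_(plen P)},
   (forall i, tnth x i = tnth w (pi i)) /\ plen P <= #|porbits pi| + k.
Proof.
case=> p [pth pl ps]; subst k.
elim: p w pth pl => [|y p IH] w /= pth pl.
  exists 1%g; split; first by move=> i; rewrite perm1 pl.
  by rewrite porbits1 card_ord addn0.
move/andP: pth => [/and3P [_ _ /existsP [i /existsP [j /andP [_ /eqP ey]]]] pth].
have [pi [Hpi Hc]] := IH y pth pl.
exists (pi * tperm i j)%g; split.
  by move=> k; rewrite Hpi ey tnth_swap2 permM.
apply: (leq_trans Hc); rewrite addnS -addn1 addnAC leq_add2r.
exact: porbits_mulr.
Qed.

Lemma card_small n M : #|[set i : 'I_n | i < M]| <= M.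
Proof.
rewrite cardE -(size_map val) -[X in _ <= X](size_iota 0).
apply: uniq_leq_size; first by rewrite (map_inj_uniq val_inj) enum_uniq.
by move=> x /mapP [i]; rewrite mem_enum inE => iM ->; rewrite mem_iota.
Qed.

Lemma porbit_memP n (pi : {perm 'I_n}) x i :
  (pi i \in porbit pi x) = (i \in porbit pi x).
Proof.
have := porbit_perm pi 1 i; rewrite expg1 => e.
by rewrite -!eq_porbit_mem e.
Qed.

Lemma orbit_bound n (pi : {perm 'I_n}) (f g : 'I_n -> nat) M :
  (forall i, f i = g (pi i)) -> (forall i : 'I_n, M <= i -> g i < f i) ->
  #|porbits pi| <= M.
Proof.
move=> Hfg Hlt.
have sub : porbits pi \subset [set porbit pi i | i in [set i : 'I_n | i < M]].
  apply/subsetP => O /imsetP [x _ ->].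
  case: (pickP (fun i => (i \in porbit pi x) && (i < M))) => [i /andP [iO iM]|N].
    apply/imsetP; exists i; first by rewrite inE.
    by apply/eqP; rewrite eq_porbit_mem porbit_sym.
  exfalso.
  have all : forall i, i \in porbit pi x -> M <= i.
    by move=> i iO; move: (N i); rewrite iO /=; case: ltnP.
  have e1 : \sum_(i in porbit pi x) f i = \sum_(i in porbit pi x) g i.
    rewrite [RHS](reindex_inj (@perm_inj _ pi)) /=.
    apply: eq_big => i; first by rewrite porbit_memP.
    by move=> _; rewrite Hfg.
  have : \sum_(i in porbit pi x) (g i).+1 <= \sum_(i in porbit pi x) f i.
    by apply: leq_sum => i iO; apply: Hlt; apply: all.
  rewrite e1.
  under eq_bigr do rewrite -addn1.
  rewrite big_split /= sum_nat_const muln1.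
  have : 0 < #|porbit pi x| by rewrite lt0n card_porbit_neq0.
  case: #|_| => // m _.
  by rewrite -{2}[\sum_(i in porbit pi x) g i]addn0 leq_add2l.
apply: leq_trans (subset_leq_card sub) _.
apply: leq_trans (leq_imset_card _ _) _.
exact: card_small.
Qed.

Definition ordle sigma := fun x y : 'I_sigma => (x <= y)%N.

Lemma sorted_gap sigma (s : seq 'I_sigma) M i x0 :
  sorted (@ordle sigma) s -> (forall c, count_mem c s <= M) ->
  M <= i -> i < size s -> (nth x0 s (i - M) : nat) < nth x0 s i.
Proof.
move=> srt cnt Mi isz.
have tr : transitive (@ordle sigma) by move=> y x z; apply: leq_trans.
have rf : reflexive (@ordle sigma) by move=> x; apply: leqnn.
have mono := sorted_leq_nth tr rf x0 srt.
have le : forall j k, j <= k -> k < size s -> (nth x0 s j : nat) <= nth x0 s k.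
  move=> j k jk ks; apply: mono => //; rewrite inE //; apply: leq_ltn_trans jk ks.
rewrite ltn_neqAle le ?leq_subr // andbT; apply/negP => /eqP eb.
set b := nth x0 s i.
have allb : all (pred1 b) (take M.+1 (drop (i - M) s)).
  apply/(all_nthP x0) => k; rewrite size_take size_drop => ks.
  have kM : k < M.+1 by move: ks; case: ifP => // /negbT H ks; lia.
  rewrite nth_take // nth_drop /=; apply/eqP/val_inj/eqP; rewrite eqn_leq.
  apply/andP; split; first by apply: le; lia.
  have -> : b = nth x0 s (i - M) by apply: val_inj; exact: (esym eb).
  apply: le; lia.
have szt : size (take M.+1 (drop (i - M) s)) = M.+1.
  rewrite size_takel // size_drop; lia.
have := cnt b.
rewrite -(cat_take_drop (i - M) s) count_cat.
rewrite -(cat_take_drop M.+1 (drop (i - M) s)) count_cat.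
move: allb; rewrite all_count szt => /eqP ->.
lia.
Qed.

Lemma s0_count sigma (P : 'I_sigma -> nat) c :
  count_mem c (flatten [seq nseq (P b) b | b <- enum 'I_sigma]) = P c.
Proof.
rewrite count_flatten -map_comp sumnE big_map big_enum /=.
under eq_bigr do rewrite count_nseq.
rewrite (bigD1 c) //= eqxx mul1n big1 ?addn0 // => b bc.
by apply/eqP; rewrite muln_eq0 eqb0; apply/orP; left; apply/negP => /eqP e; rewrite e eqxx in bc.
Qed.

Lemma s0_size sigma (P : 'I_sigma -> nat) :
  size (flatten [seq nseq (P b) b | b <- enum 'I_sigma]) = plen P.
Proof.
rewrite size_flatten /shape -map_comp sumnE big_map big_enum /=.
by under eq_bigr do rewrite size_nseq.
Qed.

Theorem theorem1 (sigma : nat) (P : 'I_sigma -> nat) :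
  1 <= plen P ->
  is_diameter P (plen P - \max_(a < sigma) P a).
Proof.
move=> n1.
have sig0 : 0 < #|'I_sigma|.
  rewrite card_ord lt0n; apply/negP => /eqP s0.
  move: n1; rewrite /plen big1 // => i _; exfalso; have := ltn_ord i; by rewrite {2}s0.
set M := \max_(a < sigma) P a.
have Mle : M <= plen P.
  by apply/bigmax_leqP => a _; rewrite /plen (bigD1 a) // leq_addr.
have [a0 Ha0] := eq_bigmax P sig0.
have cntM : forall c, P c <= M by move=> c; apply: leq_bigmax.
split.
  move=> w u Hw Hu.
  have [k' [le W]] := @upper_walk _ P a0 (mu w u a0) w u Hw Hu (leqnn _).
  have [d [Hd dle]] := min_dist W.
  exists d; split => //.
  apply: (leq_trans dle); apply: (leq_trans le).
  by rewrite /M Ha0; apply: mu_le.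
set s0 := flatten [seq nseq (P b) b | b <- enum 'I_sigma].
set su := sort (@ordle sigma) s0.
have psu : perm_eq su s0 by rewrite /su perm_sort.
have szu : size su == plen P by rewrite size_sort s0_size.
pose u : word P := Tuple szu.
have szv : size (rot (plen P - M) su) == plen P by rewrite size_rot.
pose v : word P := Tuple szv.
have cu : forall c, count_mem c u = P c.
  by move=> c; rewrite /= (seq.permP psu) s0_count.
have cv : forall c, count_mem c v = P c.
  have pr : perm_eq (rot (plen P - M) su) su by rewrite perm_rot.
  by move=> c; rewrite /= (seq.permP pr) (seq.permP psu) s0_count.
have Hu : in_parikh u by apply/forallP => c; rewrite cu.
have Hv : in_parikh v by apply/forallP => c; rewrite cv.
have srt : sorted (@ordle sigma) su.
  by apply: sort_sorted => x y; apply: leq_total.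
have Hlt : forall i : 'I_(plen P), M <= i -> (tnth v i : nat) < tnth u i.
  move=> i Mi.
  rewrite !(tnth_nth a0) /= /rot nth_cat size_drop (eqP szu).
  have -> : (i < plen P - (plen P - M)) = false.
    apply/negbTE; rewrite -leqNgt; lia.
  rewrite nth_take; last by have := ltn_ord i; lia.
  have -> : i - (plen P - (plen P - M)) = i - M by lia.
  apply: sorted_gap => //; last by rewrite (eqP szu).
  by move=> c; rewrite (seq.permP psu) s0_count.
have lower : forall k, walk_len v u k -> plen P - M <= k.
  move=> k W; have [pi [Hpi Hc]] := walk_perm W.
  have := @orbit_bound _ pi (fun i => tnth u i) (fun i => tnth v i) M
    (fun i => congr1 val (Hpi i)) Hlt.
  lia.
have [k' [le W]] := @upper_walk _ P a0 (mu v u a0) v u Hv Hu (leqnn _).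
have k'le : k' <= plen P - M.
  by apply: (leq_trans le); rewrite /M Ha0; apply: mu_le.
have ek : k' = plen P - M by apply/eqP; rewrite eqn_leq k'le lower.
exists v, u; split => //; split; first by rewrite -ek.
exact: lower.
Qed.
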